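(* Let $d_{\mathcal X}$ be a metric on $\mathcal X$, $Q$ a probability measure on $\mathcal Z$, and $P_{Z|X}$ a Markov kernel with $P_{Z|X}(\cdot|x)\ll Q$ for all $x$. If $P_{Z|X}$ satisfies $\varepsilon\cdot d_{\mathcal X}$-privacy, then for every $\alpha>1$ the PPR-compressed mechanism $x\mapsto((Z_i)_{i\ge1},K)$ satisfies $2\alpha\varepsilon\cdot d_{\mathcal X}$-privacy.
   Context: A Markov kernel $P_{W|X}$ satisfies $\varepsilon\cdot d_{\mathcal X}$-privacy if $\Pr(W\in S\mid X=x)\le e^{\varepsilon d_{\mathcal X}(x,x')}\Pr(W\in S\mid X=x')$ for all $x,x'\in\mathcal X$ and measurable $S$. PPR: let $Z_1,Z_2,\ldots$ be i.i.d. $\sim Q$, independent of the points $T_1\le T_2\le\cdots$ of a rate-$1$ Poisson process on $[0,\infty)$. For input $x$, with $P=P_{Z|X}(\cdot|x)$, set $\tilde T_i:=T_i(\frac{\mathrm dP}{\mathrm dQ}(Z_i))^{-1}$ ($:=\infty$ if the derivative is $0$, $\infty^{-\alpha}:=0$), and draw $K$ with $\Pr(K=k\mid (Z_i,T_i)_i)=\tilde T_k^{-\alpha}/\sum_i\tilde T_i^{-\alpha}$ (fresh randomness for each input). The PPR-compressed mechanism is the kernel $x\mapsto((Z_i)_{i\ge1},K)$; the shared sequence $(Z_i)$ does not depend on $x$. *)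

(* Defs.v *)
From HB Require Import structures.
From mathcomp Require Import all_boot all_order all_algebra.
From mathcomp Require Import all_classical all_reals all_analysis.
From mathcomp Require Import exponential_distribution.
Set Implicit Arguments. Unset Strict Implicit. Unset Printing Implicit Defensive.
Import Order.TTheory GRing.Theory Num.Theory.
Local Open Scope classical_set_scope.
Local Open Scope ring_scope.

Definition is_metric (R : realType) (X : Type) (d : X -> X -> R) : Prop :=
  [/\ (forall x y, 0 <= d x y),
      (forall x y, d x y = 0 <-> x = y),
      (forall x y, d x y = d y x) &
      (forall x y z, d x z <= d x y + d y z)].

Definition metric_privacy (R : realType) (X T : Type) (mT : set (set T))
    (K : X -> set T -> \bar R) (c : R) (d : X -> X -> R) : Prop :=
  forall x x' (S : set T), mT S ->
    (K x S <= (expR (c * d x x'))%:E * K x' S)%E.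

Definition is_RN_derivative (R : realType) (dz : measure_display)
    (Z : measurableType dz) (P Q : set Z -> \bar R) (f : Z -> R) : Prop :=
  [/\ (forall z, 0 <= f z), measurable_fun setT f &
      forall A, measurable A -> P A = (\int[Q]_(z in A) (f z)%:E)%E].

(* Randomness of PPR on a probability space (Omega, Pr):
   Z_0, Z_1, ... i.i.d. ~ Q and E_0, E_1, ... i.i.d. ~ Exp(1), all mutually
   independent (product rule for every finite subfamily; taking A i = setT
   or B i = setT gives the sub-families). *)
Definition ppr_randomness (R : realType) (dO dz : measure_display)
    (Omega : measurableType dO) (Pr : probability Omega R)
    (Z : measurableType dz) (Q : probability Z R)
    (Zs : nat -> Omega -> Z) (Es : nat -> Omega -> R) : Prop :=
  [/\ (forall i, measurable_fun setT (Zs i)),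
      (forall i, measurable_fun setT (Es i)) &
      forall (n : nat) (A : nat -> set Z) (B : nat -> set R),
        (forall i, measurable (A i)) -> (forall i, measurable (B i)) ->
        Pr (\bigcap_(i in [set k | (k < n)%N]) (Zs i @^-1` A i `&` Es i @^-1` B i))
        = (\prod_(i < n) (Q (A i) * exponential_prob 1 (B i)))%E].

(* Points T_1 <= T_2 <= ... of a rate-1 Poisson process on [0,oo):
   T_k = E_1 + ... + E_k (index shifted: ppr_time Es k = T_{k+1}). *)
Definition ppr_time (R : realType) (Omega : Type) (Es : nat -> Omega -> R)
    (k : nat) (w : Omega) : R :=
  \sum_(j < k.+1) Es j w.

(* tilde T_k ^ (-alpha) = ((dP/dQ)(Z_k) / T_k) ^ alpha   (= 0 if dP/dQ(Z_k) = 0) *)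
Definition ppr_weight (R : realType) (Omega Z : Type) (Zs : nat -> Omega -> Z)
    (Es : nat -> Omega -> R) (f : Z -> R) (alpha : R) (k : nat) (w : Omega) : R :=
  (f (Zs k w) / ppr_time Es k w) `^ alpha.

Definition ppr_weight_sum (R : realType) (Omega Z : Type) (Zs : nat -> Omega -> Z)
    (Es : nat -> Omega -> R) (f : Z -> R) (alpha : R) (w : Omega) : \bar R :=
  (\sum_(i <oo) (ppr_weight Zs Es f alpha i w)%:E)%E.

(* Pr(K = k | (Z_i, T_i)_i) = tilde T_k^(-alpha) / sum_i tilde T_i^(-alpha)
   (set to 0 on the null event where the normaliser is 0 or +oo) *)
Definition ppr_index_prob (R : realType) (Omega Z : Type) (Zs : nat -> Omega -> Z)
    (Es : nat -> Omega -> R) (f : Z -> R) (alpha : R) (k : nat) (w : Omega) : R :=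
  let s := ppr_weight_sum Zs Es f alpha w in
  if ((0 < s) && (s < +oo))%E then ppr_weight Zs Es f alpha k w / fine s else 0.

(* Law of the PPR output ((Z_i)_i, K) for input x, where f = dP_{Z|X}(.|x)/dQ:
   Pr(((Z_i)_i, K) in S) = E[ sum_k 1_S((Z_i)_i, k) Pr(K = k | (Z_i,T_i)_i) ] *)
Definition ppr_law (R : realType) (dO : measure_display) (Omega : measurableType dO)
    (Pr : probability Omega R) (Z : Type) (Zs : nat -> Omega -> Z)
    (Es : nat -> Omega -> R) (f : Z -> R) (alpha : R)
    (S : set ((nat -> Z) * nat)) : \bar R :=
  (\int[Pr]_w (\sum_(k <oo)
      ((\1_S ((fun i => Zs i w), k) : R) * ppr_index_prob Zs Es f alpha k w)%:E))%E.

(* Generators of the product sigma-algebra on Z^N x N (cylinder rectangles) *)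
Definition ppr_output_rects (dz : measure_display) (Z : measurableType dz)
    : set (set ((nat -> Z) * nat)) :=
  [set S | exists (i : nat) (A : set Z) (B : set nat),
     measurable A /\ S = [set p | A (p.1 i) /\ B p.2]].

(* Main.v *)
Require Import Defs.
From HB Require Import structures.
From mathcomp Require Import all_boot all_order all_algebra.
From mathcomp Require Import all_classical all_reals all_analysis.
From mathcomp Require Import exponential_distribution measurable_realfun.
From mathcomp Require Import ring.
Import Order.TTheory GRing.Theory Num.Theory.
Local Open Scope classical_set_scope.
Local Open Scope ring_scope.
Set Implicit Arguments. Unset Strict Implicit.
Lemma mEFin (R : realType) d (T : measurableType d) (D : set T) (g : T -> R) :
  measurable_fun D g -> measurable_fun D (fun z => (g z)%:E).
Proof. by move=> mg; exact: measurableT_comp. Qed.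
Lemma mcM (R : realType) d (T : measurableType d) (D : set T) (g : T -> R) c :
  measurable_fun D g -> measurable_fun D (fun z => c * g z).
Proof. move=> mg. have := measurable_funM (measurable_cst c) mg. exact. Qed.
Lemma meas_le (R : realType) d (T : measurableType d) (f g : T -> R) :
  measurable_fun setT f -> measurable_fun setT g -> measurable [set z | f z <= g z].
Proof.
move=> mf mg; have := measurable_fun_ler mf mg measurableT (I : measurable [set true]).
by rewrite setTI preimage_true.
Qed.
Lemma meas_lt (R : realType) d (T : measurableType d) (f g : T -> R) :
  measurable_fun setT f -> measurable_fun setT g -> measurable [set z | f z < g z].
Proof.
move=> mf mg; have := measurable_fun_ltr mf mg measurableT (I : measurable [set true]).
by rewrite setTI preimage_true.
Qed.

Lemma null_ratio (R : realType) (dz : measure_display) (Z : measurableType dz)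
  (Q P1 P2 : probability Z R) (f g : Z -> R) (c : R) :
  is_RN_derivative P1 Q f -> is_RN_derivative P2 Q g -> 0 <= c ->
  (forall A, measurable A -> (P1 A <= c%:E * P2 A)%E) ->
  measurable [set z | c * g z < f z] /\ Q [set z | c * g z < f z] = 0%E.
Proof.
move=> [f0 mf Pf] [g0 mg Pg] c0 H.
pose N n := [set z | c * g z + n.+1%:R^-1 <= f z].
have mN n : measurable (N n).
  apply: meas_le mf.
  have := measurable_funD (mcM c mg) (measurable_cst (n.+1%:R^-1 : R)); exact.
have QN n : Q (N n) = 0%E.
  set d := n.+1%:R^-1 : R.
  have d0 : 0 < d by rewrite invr_gt0.
  have h1 : (c%:E * P2 (N n) + d%:E * Q (N n) <= c%:E * P2 (N n))%E.
    apply: le_trans (H _ (mN n)).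
    have mcg : measurable_fun (N n) (fun z => (c * g z)%:E).
      exact: (mEFin (measurable_funS measurableT (subsetT _) (mcM c mg))).
    have e1 : (c%:E * P2 (N n))%E = (\int[Q]_(z in N n) (c * g z)%:E)%E.
      rewrite (Pg _ (mN n)) -ge0_integralZl_EFin //.
      - by move=> z _; rewrite lee_fin.
      - exact: (mEFin (measurable_funS measurableT (subsetT _) mg)).
    have e2 : (d%:E * Q (N n))%E = (\int[Q]_(z in N n) (cst d%:E) z)%E.
      by rewrite integral_cst.
    rewrite e1 e2 -ge0_integralD //.
    2: by move=> z _; rewrite lee_fin mulr_ge0.
    2: by move=> z _; rewrite /= lee_fin ltW.
    rewrite (Pf _ (mN n)).
    apply: ge0_le_integral => //.
    - by move=> z _; rewrite /= adde_ge0 // lee_fin ?mulr_ge0 // ltW.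
    - by apply: emeasurable_funD => //; exact: measurable_cst.
    - exact: (mEFin (measurable_funS measurableT (subsetT _) mf)).
  have fin : (c%:E * P2 (N n))%E \is a fin_num.
    by rewrite fin_numM // fin_num_measure.
  move: h1; rewrite -[X in (_ <= X)%E]adde0 leeD2lE // => h1.
  apply/eqP; rewrite eq_le measure_ge0 andbT.
  by rewrite -(@lee_pmul2l _ d%:E) ?lte_fin // mule0.
have eN : [set z | c * g z < f z] = \bigcup_n N n.
  apply/seteqP; split => z /=.
    move=> /ltr_add_invr [k hk]; exists k => //; exact: ltW.
  move=> [k _ hk]; apply: lt_le_trans hk.
  by rewrite ltrDl invr_gt0.
have mU : measurable [set z | c * g z < f z] by rewrite eN; exact: bigcup_measurable.
split => //.
apply/negligibleP => //; rewrite eN; apply: negligible_bigcup => k.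
exact: ((negligibleP _ (mN k)).2 (QN k)).
Qed.


Lemma pr_event (R : realType) (dO dz : measure_display)
    (Omega : measurableType dO) (Pr : probability Omega R)
    (Z : measurableType dz) (Q : probability Z R)
    (Zs : nat -> Omega -> Z) (Es : nat -> Omega -> R) (i : nat) (A : set Z) (B : set R) :
  ppr_randomness Pr Q Zs Es -> measurable A -> measurable B ->
  Pr [set w | A (Zs i w) /\ B (Es i w)] = (Q A * exponential_prob 1 B)%E.
Proof.
move=> [_ _ H] mA mB.
pose A' k := if k == i then A else setT.
pose B' k := if k == i then B else setT.
have := H i.+1 A' B'.
have -> : \bigcap_(k in [set k | (k < i.+1)%N]) (Zs k @^-1` A' k `&` Es k @^-1` B' k)
   = [set w | A (Zs i w) /\ B (Es i w)].
  apply/seteqP; split => w /=.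
    by move=> /(_ i (ltnSn i)); rewrite /A' /B' eqxx.
  move=> [hA hB] k _; rewrite /A' /B'; case: eqP => [->|] //.
rewrite big_ord_recr /= /A' /B' eqxx => -> //.
- rewrite big1 ?mul1e // => k _.
  have hk : (nat_of_ord k == i) = false by rewrite ltn_eqF.
  rewrite !hk probability_setT mul1e.
  by rewrite /exponential_prob integral_exponential_pdf.
- by move=> k; case: eqP.
- by move=> k; case: eqP.
Qed.

Lemma expo_neg (R : realType) : exponential_prob (1:R) `]-oo, 0[ = 0%E.
Proof.
rewrite /exponential_prob integral0_eq // => x; rewrite /= in_itv /= => x0.
by rewrite /exponential_pdf patchE ifF // memNset //= in_itv /= leNgt x0.
Qed.

Section pointwise.
Variables (R : realType) (Omega Z : Type) (Zs : nat -> Omega -> Z) (Es : nat -> Omega -> R).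
Variables (alpha c : R) (w : Omega).
Hypotheses (alpha0 : 0 < alpha) (c0 : 0 <= c).
Hypothesis (E0 : forall n, 0 <= Es n w).

Lemma weight_ge0 h k : 0 <= ppr_weight Zs Es h alpha k w.
Proof. exact: powR_ge0. Qed.

Lemma time_ge0 k : 0 <= ppr_time Es k w.
Proof. by apply: sumr_ge0 => j _. Qed.

Lemma weight_cmp (f g : Z -> R) (f0 : forall z, 0 <= f z) (g0 : forall z, 0 <= g z) k : f (Zs k w) <= c * g (Zs k w) ->
  ppr_weight Zs Es f alpha k w <= c `^ alpha * ppr_weight Zs Es g alpha k w.
Proof.
move=> h; rewrite /ppr_weight -powRM //; last by rewrite divr_ge0 // time_ge0.
apply: ge0_ler_powR; first exact: ltW.
- by rewrite nnegrE divr_ge0 // time_ge0.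
- by rewrite nnegrE mulr_ge0 // divr_ge0 // time_ge0.
by rewrite mulrA ler_wpM2r // invr_ge0 time_ge0.
Qed.

Lemma wsum_ge0 h : (0 <= ppr_weight_sum Zs Es h alpha w)%E.
Proof. by apply: nneseries_ge0 => n _ _; rewrite lee_fin weight_ge0. Qed.

Lemma wsum_cmp (f g : Z -> R) (f0 : forall z, 0 <= f z) (g0 : forall z, 0 <= g z) : (forall k, f (Zs k w) <= c * g (Zs k w)) ->
  (ppr_weight_sum Zs Es f alpha w <= (c `^ alpha)%:E * ppr_weight_sum Zs Es g alpha w)%E.
Proof.
move=> h; rewrite /ppr_weight_sum -nneseriesZl; last by move=> i _; rewrite lee_fin weight_ge0.
apply: lee_nneseries => [i _ _|n _]; first by rewrite lee_fin weight_ge0.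
by rewrite -EFinM lee_fin weight_cmp.
Qed.

Lemma index_ge0 h k : 0 <= ppr_index_prob Zs Es h alpha k w.
Proof.
rewrite /ppr_index_prob; case: ifP => // _.
by rewrite divr_ge0 ?weight_ge0 // fine_ge0 // wsum_ge0.
Qed.

Lemma index_cmp (f g : Z -> R) (f0 : forall z, 0 <= f z) (g0 : forall z, 0 <= g z) k : (forall k, f (Zs k w) <= c * g (Zs k w)) ->
  (forall k, g (Zs k w) <= c * f (Zs k w)) ->
  ppr_index_prob Zs Es f alpha k w <=
    (c `^ alpha * c `^ alpha) * ppr_index_prob Zs Es g alpha k w.
Proof.
move=> hfg hgf; set C := c `^ alpha.
have C0 : 0 <= C by exact: powR_ge0.
rewrite /ppr_index_prob.
set s := ppr_weight_sum Zs Es f alpha w; set s' := ppr_weight_sum Zs Es g alpha w.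
have hs : (s <= C%:E * s')%E := wsum_cmp f0 g0 hfg.
have hs' : (s' <= C%:E * s)%E := wsum_cmp g0 f0 hgf.
case: ifPn => [/andP[s0 soo]|_]; last by rewrite mulr_ge0 // ?mulr_ge0 // index_ge0.
have sfin : s \is a fin_num by rewrite ge0_fin_numE // ltW.
have s'oo : (s' < +oo)%E.
  by apply: le_lt_trans hs' _; rewrite -(fineK sfin) -EFinM ltry.
have s'0 : (0 < s')%E.
  rewrite lt_neqAle wsum_ge0 andbT; apply/eqP => s'E.
  by move: hs; rewrite -s'E mule0 leNgt s0.
rewrite s'0 s'oo /=.
have s'fin : s' \is a fin_num by rewrite ge0_fin_numE // ltW.
have a0 : 0 < fine s by apply: fine_gt0; rewrite s0 soo.
have b0 : 0 < fine s' by apply: fine_gt0; rewrite s'0 s'oo.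
have ba : fine s' <= C * fine s.
  by rewrite -lee_fin EFinM !fineK.
rewrite ler_pdivrMr //.
apply: (le_trans (weight_cmp f0 g0 (hfg k))).
have -> : C * C * (ppr_weight Zs Es g alpha k w / fine s') * fine s
   = C * ppr_weight Zs Es g alpha k w * (C * fine s / fine s').
  by ring.
apply: ler_peMr; first by rewrite mulr_ge0 // weight_ge0.
by rewrite ler_pdivlMr // mul1r.
Qed.
End pointwise.

Lemma measurable_invR (R : realType) : measurable_fun setT (@GRing.inv R).
Proof.
have -> : @GRing.inv R = (fun x => if x < 0 then - ((- x) `^ (-1)) else x `^ (-1)).
  apply/funext => x; case: ifPn => x0.
  - by rewrite powR_inv1 ?oppr_ge0 ?ltW // invrN opprK.
  - by rewrite powR_inv1 // leNgt.
apply: measurable_fun_ifT.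
- have h := @measurable_fun_ltr _ _ R setT id (cst 0) (@measurable_id _ _ setT) (measurable_cst _).
  exact: h.
- have h := measurableT_comp (@measurable_powR R (-1)) (measurable_funN (@measurable_id _ _ setT)).
  have h2 := measurable_funN h.
  exact: h2.
- exact: measurable_powR.
Qed.

Lemma preimage_meas (dz dO : measure_display) (Z : measurableType dz)
  (Omega : measurableType dO) (Zs : nat -> Omega -> Z) :
  (forall i, measurable_fun setT (Zs i)) ->
  forall S, (<<s @ppr_output_rects dz Z >>) S ->
  forall k, measurable [set w | S ((fun i => Zs i w), k)].
Proof.
move=> mZ S hS.
pose H := [set S : set ((nat -> Z) * nat) | forall k, measurable [set w | S ((fun i => Zs i w), k)]].
suff : <<s @ppr_output_rects dz Z >> `<=` H by move=> /(_ _ hS).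
apply: smallest_sub.
  split.
  - by move=> k; rewrite [X in measurable X](_ : _ = set0) //; apply/seteqP; split.
  - move=> A hA k; rewrite [X in measurable X](_ : _ = ~` [set w | A ((fun i => Zs i w), k)]).
      exact: measurableC.
    by apply/seteqP; split => w /=; [move=> [] | ].
  - move=> F hF k; rewrite [X in measurable X](_ : _ = \bigcup_n [set w | F n ((fun i => Zs i w), k)]).
      by apply: bigcup_measurable => n _; exact: hF.
    by apply/seteqP; split => w /=.
move=> _ [i [A [B [mA ->]]]] k /=.
have [Bk|nBk] := pselect (B k).
  rewrite [X in measurable X](_ : _ = Zs i @^-1` A).
    by have := mZ i measurableT A mA; rewrite setTI.
  by apply/seteqP; split => w /=; [case|].
by rewrite [X in measurable X](_ : _ = set0) //; apply/seteqP; split => w //= [].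
Qed.

Section integrand.
Variables (R : realType) (dO dz : measure_display) (Omega : measurableType dO)
  (Z : measurableType dz) (Zs : nat -> Omega -> Z) (Es : nat -> Omega -> R).
Hypotheses (mZ : forall i, measurable_fun setT (Zs i)) (mE : forall i, measurable_fun setT (Es i)).
Variables (f : Z -> R) (alpha : R).
Hypothesis mf : measurable_fun setT f.

Lemma mtime k : measurable_fun setT (ppr_time Es k).
Proof.
have := @measurable_sum _ _ R setT _ (index_enum 'I_k.+1) (fun j : 'I_k.+1 => Es j) (fun j => mE j).
exact.
Qed.

Lemma mweight k : measurable_fun setT (ppr_weight Zs Es f alpha k).
Proof.
have h1 := measurableT_comp mf (mZ k).
have h2 := measurableT_comp (@measurable_invR R) (mtime k).
have h3 := measurable_funM h1 h2.
have h4 := measurableT_comp (@measurable_powR R alpha) h3.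
exact: h4.
Qed.

Lemma mwsum : measurable_fun setT (ppr_weight_sum Zs Es f alpha).
Proof.
have := @ge0_emeasurable_sum _ _ R setT (fun i w => (ppr_weight Zs Es f alpha i w)%:E) xpredT
  (fun k x _ _ => powR_ge0 _ _) (fun k _ => mEFin (mweight k)).
exact.
Qed.

Lemma mindex k : measurable_fun setT (ppr_index_prob Zs Es f alpha k).
Proof.
have hb1 := @measurable_fun_lte _ _ R setT (cst 0%E) _ (measurable_cst _) mwsum.
have hb2 := @measurable_fun_lte _ _ R setT _ (cst +oo%E) mwsum (measurable_cst _).
have hb := measurable_and hb1 hb2.
have hfine := measurableT_comp (@fine_measurable R setT measurableT) mwsum.
have hinv := measurableT_comp (@measurable_invR R) hfine.
have hq := measurable_funM (mweight k) hinv.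
have := measurable_fun_ifT hb hq (measurable_cst (0:R)).
exact.
Qed.
Lemma mintegrand S : (<<s @ppr_output_rects dz Z >>) S ->
  measurable_fun setT (fun w => (\sum_(k <oo)
      ((\1_S ((fun i => Zs i w), k) : R) * ppr_index_prob Zs Es f alpha k w)%:E)%E).
Proof.
move=> hS.
have mI k : measurable_fun setT (fun w => (\1_S ((fun i => Zs i w), k) : R)).
  have := @measurable_indic _ _ R setT _ (preimage_meas mZ hS k).
  exact.
have := @ge0_emeasurable_sum _ _ R setT
  (fun k w => ((\1_S ((fun i => Zs i w), k) : R) * ppr_index_prob Zs Es f alpha k w)%:E) xpredT.
move=> /(_ _ (fun k _ => mEFin (measurable_funM (mI k) (mindex k)))).
apply.
move=> k w _ _; rewrite lee_fin mulr_ge0 //; last exact: index_ge0.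
Qed.
End integrand.

Unset Implicit Arguments.

Theorem theorem4 (R : realType) (X : Type) (dX : X -> X -> R)
    (dz : measure_display) (Z : measurableType dz) (Q : probability Z R)
    (P : X -> probability Z R) (dPdQ : X -> Z -> R) (eps : R)
    (dO : measure_display) (Omega : measurableType dO) (Pr : probability Omega R)
    (Zs : nat -> Omega -> Z) (Es : nat -> Omega -> R) :
  is_metric dX ->
  (forall x, P x `<< Q) ->
  (forall x, is_RN_derivative (P x) Q (dPdQ x)) ->
  ppr_randomness Pr Q Zs Es ->
  metric_privacy measurable (fun x => (P x : set Z -> \bar R)) eps dX ->
  forall alpha : R, 1 < alpha ->
  metric_privacy (<<s @ppr_output_rects dz Z >>)
    (fun x => ppr_law Pr Zs Es (dPdQ x) alpha) (2 * alpha * eps) dX.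
Proof.
move=> [_ _ dsym _] _ hRN hrand hpriv alpha alpha1 x x' S hS.
have alpha0 : 0 < alpha by apply: lt_trans alpha1.
set c := expR (eps * dX x x').
have c0 : 0 <= c by exact: expR_ge0.
have [mN1 QN1] := null_ratio (hRN x) (hRN x') c0 (fun A mA => hpriv x x' A mA).
have [mN2 QN2] : measurable [set z | c * dPdQ x z < dPdQ x' z] /\
    Q [set z | c * dPdQ x z < dPdQ x' z] = 0%E.
  apply: null_ratio (hRN x') (hRN x) c0 _ => A mA.
  by rewrite /c dsym; exact: hpriv.
have [mZ mE _] := hrand.
have f0 := (fun z => match hRN x with And3 h _ _ => h z end).
have g0 := (fun z => match hRN x' with And3 h _ _ => h z end).
have mf : measurable_fun setT (dPdQ x) by case: (hRN x).
have mg : measurable_fun setT (dPdQ x') by case: (hRN x').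
set C := c `^ alpha.
have eC : expR (2 * alpha * eps * dX x x') = C * C.
  rewrite /C /powR gt_eqF ?expR_gt0 // expRK -expRD /c; congr expR; ring.
rewrite eC /ppr_law.
have FG := mintegrand mZ mE alpha mg hS.
have FF := mintegrand mZ mE alpha mf hS.
have Fge0 h w : (0 <= \sum_(k <oo) ((\1_S ((fun i => Zs i w), k) : R) *
    ppr_index_prob Zs Es h alpha k w)%:E)%E.
  by apply: nneseries_ge0 => k _ _; rewrite lee_fin mulr_ge0 // index_ge0.
have CC0 : 0 <= C * C by rewrite mulr_ge0 // powR_ge0.
rewrite -(@ge0_integralZl_EFin _ _ R Pr setT measurableT _ (fun w _ => Fge0 _ w) FG (C * C) CC0).
apply: (@ae_ge0_le_integral _ _ R Pr setT measurableT _ _ (fun w _ => Fge0 _ w) FF).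
- by move=> w _; rewrite mule_ge0 // lee_fin.
- exact: (measurable_funeM ((C * C)%:E) FG).
have good : {ae Pr, forall w, forall n, dPdQ x (Zs n w) <= c * dPdQ x' (Zs n w) /\
    dPdQ x' (Zs n w) <= c * dPdQ x (Zs n w) /\ 0 <= Es n w}.
  apply: ae_foralln => n.
  pose U1 := [set w | [set z | c * dPdQ x' z < dPdQ x z] (Zs n w) /\ [set: R] (Es n w)].
  pose U2 := [set w | [set z | c * dPdQ x z < dPdQ x' z] (Zs n w) /\ [set: R] (Es n w)].
  pose U3 := [set w | [set: Z] (Zs n w) /\ `]-oo, 0[%classic (Es n w)].
  apply: (@negligibleS _ _ _ _ (U1 `|` U2 `|` U3)).
    move=> w /= hw; apply: contrapT => hU; apply: hw.
    have [h1|h1] := leP (dPdQ x (Zs n w)) (c * dPdQ x' (Zs n w)); last first.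
      by exfalso; apply: hU; left; left.
    have [h2|h2] := leP (dPdQ x' (Zs n w)) (c * dPdQ x (Zs n w)); last first.
      by exfalso; apply: hU; left; right.
    have [h3|h3] := leP 0 (Es n w) => //.
    by exfalso; apply: hU; right; split => //; rewrite /= in_itv /=.
  have mU A B : measurable A -> measurable B -> measurable [set w | A (Zs n w) /\ B (Es n w)].
    move=> mA mB; rewrite [X in measurable X](_ : _ = Zs n @^-1` A `&` Es n @^-1` B) //.
    apply: measurableI.
      by have := mZ n measurableT A mA; rewrite setTI.
    by have := mE n measurableT B mB; rewrite setTI.
  apply: negligibleU; first apply: negligibleU.
  - apply/negligibleP; first exact: mU.
    by apply: eq_trans (pr_event n hrand mN1 measurableT) _; rewrite QN1 mul0e.
  - apply/negligibleP; first exact: mU.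
    by apply: eq_trans (pr_event n hrand mN2 measurableT) _; rewrite QN2 mul0e.
  - apply/negligibleP; first by apply: mU => //; exact: measurable_itv.
    by apply: eq_trans (pr_event n hrand measurableT (measurable_itv _)) _; rewrite expo_neg mule0.
apply: filterS good => w hw _.
rewrite -nneseriesZl; last by move=> k _; rewrite lee_fin mulr_ge0 // index_ge0.
apply: lee_nneseries => [k _ _|k _].
  by rewrite lee_fin mulr_ge0 // index_ge0.
rewrite -EFinM lee_fin mulrCA ler_wpM2l //.
apply: index_cmp => //.
- by move=> n; case: (hw n) => _ [].
- by move=> n; case: (hw n).
- by move=> n; case: (hw n) => _ [].
Qed.
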